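(* Let $R$ be a finite commutative ring with identity. If the involutory Cayley graph $\Gamma(R)$ has genus exactly $1$, then $\Gamma(R)$ is connected and $4$-regular.
   Context: All rings are finite, commutative, with nonzero identity. The involutory Cayley graph $\Gamma(R)$ is the simple graph with vertex set $R$ in which distinct $x,y$ are adjacent iff $(x-y)^2=1$. Genus means the orientable genus of a graph (the least number of handles of a sphere on which it embeds without crossings). *)

(* Defs.v *)
From HB Require Import structures.
From mathcomp Require Import all_boot all_order all_algebra all_fingroup.
Set Implicit Arguments. Unset Strict Implicit. Unset Printing Implicit Defensive.
Import GRing.Theory.
Local Open Scope ring_scope.

Definition invCayley (R : finComNzRingType) : rel R :=
  fun x y => (x != y) && ((x - y) ^+ 2 == 1).

Local Open Scope nat_scope.

Section Genus.
Variables (T : finType) (e : rel T).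

Definition dart (d : T * T) : bool := e d.1 d.2.

Definition rotation_system (s : {perm (T * T)}) : Prop :=
  [/\ forall d, ~~ dart d -> s d = d,
      forall d, dart d -> dart (s d) /\ (s d).1 = d.1
    & forall d d', dart d -> dart d' -> d.1 = d'.1 -> fconnect s d d'].

Definition face_perm (s : {perm (T * T)}) (d : T * T) : T * T := s (d.2, d.1).

Definition n_isolated : nat := #|[pred x : T | [forall y, ~~ e x y]]|.

(* number of faces of the embedding given by s; an isolated vertex
   contributes one face *)
Definition n_faces (s : {perm (T * T)}) : nat :=
  n_comp (frel (face_perm s)) dart + n_isolated.

Definition n_vertices : nat := #|T|.
Definition n_edges : nat := #|[pred d | dart d]| %/ 2.
Definition n_components : nat := n_comp e predT.

(* Orientable genus (via Heffter-Edmonds-Ringel rotation systems and Euler's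
   formula V - E + F = 2c - 2g, summing over components):
   g is the minimum, over rotation systems, of (2c - V + E - F)/2. *)
Definition has_genus (g : nat) : Prop :=
  (exists s, rotation_system s /\
     2 * n_components + n_edges = n_vertices + n_faces s + 2 * g) /\
  (forall s, rotation_system s ->
     n_vertices + n_faces s + 2 * g <= 2 * n_components + n_edges).

End Genus.

Definition connected_graph (T : finType) (e : rel T) : Prop :=
  forall x y : T, connect e x y.

Definition regular_graph (T : finType) (e : rel T) (k : nat) : Prop :=
  forall x : T, #|[pred y | e x y]| = k.

(* Main.v *)
Require Import Defs.
From mathcomp Require Import all_boot all_order all_algebra all_fingroup.
Set Implicit Arguments. Unset Strict Implicit. Unset Printing Implicit Defensive.


Section Generic.
Variable X : finType.

Lemma card_partition_lab (Y : finType) (P : pred Y) (lab : X -> Y) (A : pred X) :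
  (forall x, A x -> P (lab x)) ->
  #|A| = \sum_(y | P y) #|[pred x | A x && (lab x == y)]|.
Proof.
move=> HP; rewrite -sum1_card (partition_big lab P) //.
by apply: eq_bigr => y _; rewrite -sum1_card.
Qed.

Lemma card_imset_kernel (Y Z : finType) (g1 : X -> Y) (g2 : X -> Z) (A : {set X}) :
  {in A &, forall x y, (g1 x == g1 y) = (g2 x == g2 y)} ->
  #|g1 @: A| = #|g2 @: A|.
Proof.
move=> Hk.
have [A0|[a Aa]] := set_0Vmem A.
  rewrite A0 (imset0 g1) (imset0 g2); by rewrite !cards0.
pose h (v : Y) : Z := if [pick y in A | g1 y == v] is Some y then g2 y else g2 a.
have hE x : x \in A -> h (g1 x) = g2 x.
  rewrite /h => xA; case: pickP => [y /andP[yA /eqP e]|/(_ x)]; last by rewrite xA eqxx.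
  by apply/eqP; rewrite -Hk // e.
have -> : g2 @: A = h @: (g1 @: A).
  rewrite -imset_comp; apply: eq_in_imset => x xA /=; by rewrite hE.
rewrite [RHS]card_in_imset // => _ _ /imsetP[x xA ->] /imsetP[y yA ->].
by rewrite !hE // => /eqP; rewrite -Hk // => /eqP.
Qed.

Variable f : X -> X.
Hypothesis finj : injective f.

Lemma fcsym : forall x y, fconnect f x y = fconnect f y x.
Proof. exact: fconnect_sym. Qed.

Lemma fcard_imset (A : {pred X}) : fclosed f A -> fcard f A = #|froot f @: [set x in A]|.
Proof.
move=> clA; rewrite /n_comp_mem; apply: eq_card => x; rewrite !inE.
apply/andP/imsetP => [[/eqP rx xA]|[y yA ->]].
  by exists x; rewrite ?inE // rx.
split; first exact: (roots_root fcsym).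
rewrite inE in yA; by rewrite -(closed_connect clA (connect_root _ y)).
Qed.

End Generic.

Section Conj.
Variable X : finType.
Variables (f1 f2 g : X -> X) (A B : {pred X}).
Hypotheses (inj1 : injective f1) (inj2 : injective f2) (injg : injective g).
Hypotheses (clA : fclosed f1 A) (clB : fclosed f2 B).
Hypothesis gAB : forall x, x \in A -> g x \in B.
Hypothesis gBA : forall y, y \in B -> exists2 x, x \in A & y = g x.
Hypothesis comm : {in A, forall x, f2 (g x) = g (f1 x)}.

Lemma iter_conj n x : x \in A -> iter n f2 (g x) = g (iter n f1 x) /\ iter n f1 x \in A.
Proof.
move=> xA; elim: n => [|n [IH1 IH2]] //=.
by rewrite IH1 comm // -(fclosed1 clA).
Qed.

Lemma fconnect_conj x y : x \in A -> y \in A ->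
  fconnect f2 (g x) (g y) = fconnect f1 x y.
Proof.
move=> xA yA; apply/idP/idP => H.
  have := iter_findex H; rewrite (iter_conj _ xA).1 => /injg <-.
  exact: fconnect_iter.
by rewrite -(iter_findex H) -(iter_conj _ xA).1 fconnect_iter.
Qed.

Lemma fcard_conj : fcard f2 B = fcard f1 A.
Proof.
rewrite (fcard_imset inj2 clB) (fcard_imset inj1 clA).
have -> : [set x in B] = g @: [set x in A].
  apply/setP => y; rewrite inE; apply/idP/imsetP => [/gBA [x xA ->]|[x]].
    by exists x; rewrite ?inE.
  by rewrite inE => /gAB yB ->.
rewrite -imset_comp; apply: card_imset_kernel => x y; rewrite !inE => xA yA /=.
rewrite !(root_connect (fcsym _)) //; exact: fconnect_conj.
Qed.

End Conj.

Section OrderBound.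
Variable X : finType.
Variables (f : X -> X) (A : {pred X}).
Hypotheses (finj : injective f) (clA : fclosed f A).

Lemma card_root_class r : froots f r -> r \in A ->
  #|[pred x | (x \in A) && (froot f x == r)]| = fingraph.order f r.
Proof.
move=> /eqP rr rA; apply: eq_card => x; rewrite !inE /=.
rewrite -{1}rr (root_connect (fcsym finj)) (fcsym finj).
apply/andP/idP => [[]//|H]; split => //.
by rewrite -(closed_connect clA H).
Qed.

Lemma fcard_order_ge n : (forall x, x \in A -> n <= fingraph.order f x) -> n * fcard f A <= #|A|.
Proof.
move=> Hn.
rewrite (@card_partition_lab _ _ [pred r | froots f r && (r \in A)] (froot f)); last first.
  move=> x xA /=; rewrite (roots_root (fcsym finj)) /=.
  by rewrite -(closed_connect clA (connect_root _ x)).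
rewrite /n_comp_mem -sum1_card big_distrr /=.
rewrite [X in X <= _](eq_bigl [pred r | froots f r && (r \in A)]); last by move=> r; rewrite !inE.
apply: leq_sum => r /andP[rr rA]; rewrite muln1.
have := card_root_class rr rA => /= ->; exact: Hn.
Qed.

End OrderBound.

Section Porbits.
Variable X : finType.
Variables (p : {perm X}) (A : {pred X}).
Hypotheses (clA : fclosed p A) (fixA : forall x, x \notin A -> p x = x).

Lemma pinj : injective p. Proof. exact: perm_inj. Qed.

Lemma porbits_card : #|porbits p| = fcard p A + #|[predC A]|.
Proof.
have -> : #|porbits p| = #|froot p @: [set x in predT]|.
  rewrite /porbits; have -> : [set porbit p x | x in X] = porbit p @: [set x in predT].
    apply/setP => z; apply/imsetP/imsetP => -[x]; by exists x.
  apply: card_imset_kernel => x y _ _.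
  rewrite eq_porbit_mem (root_connect (fcsym pinj)).
  apply/porbitP/idP => [[i ->]|H]; first by rewrite (fcsym pinj) permX fconnect_iter.
  exists (findex p y x); rewrite permX iter_findex // (fcsym pinj) //.
rewrite -fcard_imset; last by [move=> x y _]; last exact: pinj.
rewrite (n_compC A); congr (_ + _).
rewrite -[RHS](@fcard_order_set _ p pinj 1); first by rewrite muln1.
  apply/subsetP => x; rewrite !inE => xA.
  apply/eqP; rewrite -(card1 x); apply: eq_card => y; rewrite !inE.
  apply/idP/eqP => [H|->]; last exact: connect0.
  rewrite -(iter_findex H); elim: (findex p x y) => //= n ->; exact: fixA.
move=> x y H; rewrite !inE (clA H) //.
Qed.

End Porbits.

Lemma invol_even (X : finType) (h : X -> X) (A : {set X}) :
  (forall x, x \in A -> [/\ h x \in A, h (h x) = x & h x != x]) -> ~~ odd #|A|.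
Proof.
have [n] := ubnP #|A|; elim: n A => // n IH A ltA H.
have [A0|[a aA]] := set_0Vmem A; first by rewrite A0 cards0.
have [haA hha hna] := H a aA.
have haA' : h a \in A :\ a by rewrite !inE hna.
rewrite (cardsD1 a A) aA (cardsD1 (h a) (A :\ a)) haA' /=.
rewrite negbK add0n; apply: IH.
  by move: ltA; rewrite (cardsD1 a A) aA (cardsD1 (h a) (A :\ a)) haA' !add1n ltnS => /ltnW.
move=> x; rewrite !inE => /and3P[xha xa xA].
have [hxA hhx hnx] := H x xA; split => //.
rewrite hxA andbT; apply/andP; split.
  by apply: contra xa => /eqP e; rewrite -hhx e hha.
by apply: contra xha => /eqP e; rewrite -hhx e.
Qed.


Lemma fclosed_pres (X : finType) (f : X -> X) (A : {pred X}) :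
  (forall x, (f x \in A) = (x \in A)) -> fclosed f A.
Proof. by move=> H x y /eqP <-; rewrite H. Qed.

Section Rot.
Variables (T : finType) (e : rel T).
Hypotheses (esymm : symmetric e) (eirr : irreflexive e).
Variable s : {perm (T * T)}.
Hypothesis rs : rotation_system e s.

Lemma csym : connect_sym e. Proof. exact: sym_connect_sym. Qed.

Lemma rs_fst d : (s d).1 = d.1.
Proof.
case: rs => H1 H2 _; case D: (dart e d); first by case: (H2 d D).
by rewrite H1 // D.
Qed.

Lemma rs_dart d : dart e (s d) = dart e d.
Proof.
case: rs => H1 H2 _; case D: (dart e d); first by case: (H2 d D).
by rewrite H1 // D.
Qed.

Lemma iter_fst n d : (iter n s d).1 = d.1.
Proof. by elim: n => //= n IH; rewrite rs_fst. Qed.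

Notation fp := (face_perm s).

Lemma fp_inj : injective fp.
Proof.
move=> [a b] [a' b'] /perm_inj [-> ->] //.
Qed.

Lemma fp_dart d : dart e (fp d) = dart e d.
Proof. by rewrite /face_perm rs_dart /dart /= esymm. Qed.

Lemma fp_fst d : (fp d).1 = d.2.
Proof. by rewrite /face_perm rs_fst. Qed.

Definition Dr (r : T) : pred (T * T) := [pred d | e d.1 d.2 && (fingraph.root e d.1 == r)].

Lemma root_adj x y : e x y -> fingraph.root e y = fingraph.root e x.
Proof. move=> H; symmetry; apply/(fingraph.rootP csym). exact: connect1. Qed.

Lemma fp_Dr r d : (fp d \in Dr r) = (d \in Dr r).
Proof.
rewrite !inE /=; have := fp_dart d; rewrite /dart => ->.
case D: (e d.1 d.2) => //=; by rewrite fp_fst (root_adj D).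
Qed.

Lemma Dr_closed r : fclosed fp (Dr r).
Proof. apply: fclosed_pres => d; exact: fp_Dr. Qed.

Lemma dart_closed : fclosed fp (dart e).
Proof. apply: fclosed_pres => d; exact: fp_dart. Qed.

Lemma s_Dr r d : (s d \in Dr r) = (d \in Dr r).
Proof. by rewrite !inE /=; have := rs_dart d; rewrite /dart => ->; rewrite rs_fst. Qed.

Hypothesis deg2 : forall y x, e y x -> exists2 w, e y w & w != x.

Lemma fp_order3 d : dart e d -> 3 <= fingraph.order fp d.
Proof.
move=> Dd.
have o1 : fp d != d.
  apply/eqP => /(f_equal fst); rewrite fp_fst => E.
  by move: Dd; rewrite /dart -E eirr.
have o2 : fp (fp d) != d.
  apply/eqP => E.
  have E1 : (fp d).2 = d.1.
    by move: (f_equal fst E); rewrite fp_fst.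
  have sfix : s (d.2, d.1) = (d.2, d.1).
    have : fp d = ((fp d).1, (fp d).2) by case: (fp d).
    by rewrite fp_fst E1.
  have Dd' : e d.2 d.1 by rewrite esymm.
  have [w ew wn] := deg2 Dd'.
  case: rs => _ _ H3.
  have := H3 (d.2, d.1) (d.2, w); rewrite /dart /= Dd' ew => /(_ isT isT erefl).
  have Hi : forall n, iter n s (d.2,d.1) = (d.2,d.1) by elim => //= n ->.
  by move=> /iter_findex; rewrite Hi => -[E2]; rewrite E2 eqxx in wn.
have := iter_order fp_inj d.
case: (fingraph.order fp d) (fingraph.order_gt0 fp d) => [|[|[|n]]] //= _.
  by move/eqP; rewrite (negbTE o1).
by move/eqP; rewrite (negbTE o2).
Qed.

Lemma face_bound : 3 * fcard fp (dart e) <= #|dart e|.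
Proof.
apply: fcard_order_ge; [exact: fp_inj | exact: dart_closed |].
by move=> d /fp_order3.
Qed.

End Rot.

Section Parity.
Variables (T : finType) (e : rel T).
Hypotheses (esymm : symmetric e) (eirr : irreflexive e).
Variable s : {perm (T * T)}.
Hypothesis rs : rotation_system e s.
Hypothesis deg1 : forall x, exists y, e x y.
Variable r : T.

Notation groot := (fingraph.root e).
Notation D := (Dr e r).
Notation fp := (face_perm s).

Definition sig_fun d := if groot d.1 == r then s d else d.
Lemma sig_inj : injective sig_fun.
Proof.
rewrite /sig_fun => d d'.
case: ifP => H; case: ifP => H' //; first exact: perm_inj.
  by move=> E; move: H'; rewrite -E (rs_fst rs) H.
by move=> E; move: H; rewrite E (rs_fst rs) H'.
Qed.
Definition sig := perm sig_inj.

Definition alp_fun (d : T * T) := if (groot d.1 == r) && e d.1 d.2 then (d.2, d.1) else d.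
Lemma alp_inj : injective alp_fun.
Proof.
rewrite /alp_fun => d d'.
case: ifP => /andP H; case: ifP => /andP H' //.
- by case: d d' {H H'} => a b [a' b'] /= [-> ->].
- move=> E; case: H' => [] /=; case: H => /eqP rr ed; rewrite -E /=.
  by rewrite (root_adj esymm ed) rr esymm ed.
- move=> E; case: H => [] /=; case: H' => /eqP rr ed; rewrite E /=.
  by rewrite (root_adj esymm ed) rr esymm ed.
Qed.
Definition alp := perm alp_inj.

Lemma sig_Dr d : (sig d \in D) = (d \in D).
Proof.
rewrite permE /sig_fun; case: ifP => // _; exact: s_Dr.
Qed.

Lemma sig_fix d : d \notin D -> sig d = d.
Proof.
rewrite permE /sig_fun !inE /= => H; case: ifP => // rr.
by case: rs => H1 _ _; apply: H1; rewrite /dart; move: H; rewrite rr andbT.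
Qed.

Lemma alp_Dr d : (alp d \in D) = (d \in D).
Proof.
rewrite permE /alp_fun !inE /=; case: ifP => // /andP[/eqP rr ed] /=.
by rewrite esymm ed (root_adj esymm ed) rr eqxx.
Qed.

Lemma alp_fix d : d \notin D -> alp d = d.
Proof. by rewrite permE /alp_fun !inE /= andbC => /negbTE ->. Qed.

Definition phi := (alp * sig)%g.

Lemma phi_eq d : d \in D -> phi d = fp d.
Proof.
move=> dD; rewrite permM; have := dD; rewrite !inE /= => /andP[ed /eqP rr].
rewrite [alp d]permE /alp_fun rr eqxx ed /= permE /sig_fun /=.
by rewrite (root_adj esymm ed) rr eqxx.
Qed.

Lemma phi_Dr d : (phi d \in D) = (d \in D).
Proof. by rewrite permM sig_Dr alp_Dr. Qed.

Lemma phi_fix d : d \notin D -> phi d = d.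
Proof. by move=> H; rewrite permM alp_fix // sig_fix. Qed.

Lemma perm_closed (p : {perm (T * T)}) : (forall d, (p d \in D) = (d \in D)) -> fclosed p D.
Proof. exact: fclosed_pres. Qed.

Lemma s_closed : fclosed s D.
Proof. apply: perm_closed => d; exact: s_Dr. Qed.

Lemma fcard_sig : fcard sig D = fcard s D.
Proof.
apply: (@fcard_conj _ s sig id) => //; try exact: perm_inj.
- exact: s_closed.
- apply: perm_closed; exact: sig_Dr.
- by move=> y yD; exists y.
- move=> x; rewrite !inE /= => /andP[_ rr]; by rewrite permE /sig_fun rr.
Qed.

Lemma fcard_phi : fcard phi D = fcard fp D.
Proof.
apply: (@fcard_conj _ fp phi id) => //; try exact: perm_inj.
- exact: fp_inj.
- exact: Dr_closed.
- apply: perm_closed; exact: phi_Dr.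
- by move=> y yD; exists y.
- move=> x xD; exact: phi_eq.
Qed.

Definition Vr := #|[pred x | groot x == r]|.

Lemma fcard_s : fcard s D = Vr.
Proof.
rewrite (fcard_imset (@perm_inj _ s) s_closed).
rewrite (@card_imset_kernel _ _ _ _ (fun d => d.1)); last first.
  move=> x y; rewrite !inE => xD yD; rewrite (root_connect (fcsym (@perm_inj _ s))).
  apply/idP/eqP => [H|E].
    by rewrite -(iter_findex H) (iter_fst rs).
  case: rs => _ _ H3; apply: H3 => //; [by case/andP: xD | by case/andP: yD].
apply: eq_card => x; rewrite !inE; apply/imsetP/idP => [[d]|rx].
  by rewrite inE => /andP[_ rr] ->.
have [y exy] := deg1 x; exists (x, y) => //; by rewrite !inE /= exy.
Qed.

Lemma fcard_alp : fcard alp D * 2 = #|D|.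
Proof.
apply: fcard_order_set; [exact: perm_inj | | apply: perm_closed; exact: alp_Dr].
apply/subsetP => d dD; rewrite inE; have := dD; rewrite !inE /= => /andP[ed /eqP rr].
have sw : alp d = (d.2, d.1) by rewrite permE /alp_fun rr eqxx ed.
have sw2 : alp (d.2, d.1) = d.
  rewrite permE /alp_fun /= esymm ed (root_adj esymm ed) rr eqxx /=; by case: d {dD ed rr sw}.
have neq : d != (d.2, d.1).
  by case: d {dD rr sw sw2} ed => a b /= ed; apply/eqP => [[E _]]; rewrite E eirr in ed.
apply/eqP; rewrite /fingraph.order (_ : 2 = #|pred2 d (d.2, d.1)|); last by rewrite card2 neq.
apply: eq_card => y; rewrite !inE.
apply/idP/idP => [H|/orP[]/eqP->]; last 2 first.
- exact: connect0.
- rewrite -sw; exact: fconnect1.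
rewrite -(iter_findex H); elim: (findex _ _ _) => [|n]; first by rewrite eqxx.
by move=> /= /orP[]/eqP->; rewrite ?sw ?sw2 eqxx ?orbT.
Qed.

Lemma Dr_parity : odd (fcard fp D) = odd (#|D| %/ 2) (+) odd Vr.
Proof.
have Hp := odd_permM alp sig; rewrite -/phi /odd_perm in Hp.
rewrite (porbits_card (perm_closed phi_Dr) phi_fix) in Hp.
rewrite (porbits_card (perm_closed alp_Dr) alp_fix) in Hp.
rewrite (porbits_card (perm_closed sig_Dr) sig_fix) in Hp.
rewrite fcard_phi fcard_sig fcard_s in Hp.
rewrite -fcard_alp mulnK //.
rewrite -(cardC D) -fcard_alp !oddD oddM /= andbF in Hp.
move: Hp; case: (odd (fcard fp D)); case: (odd (fcard alp D)); case: (odd Vr);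
  case: (odd #|[predC D]|) => //.
Qed.

End Parity.

Import GRing.Theory.


Section Invol.
Variable R : finComNzRingType.

Definition S : {set R} := [set u : R | (u ^+ 2 == 1)%R].

Lemma S1 : (1%R : R) \in S. Proof. by rewrite inE expr1n. Qed.

Lemma SM u x : u \in S -> x \in S -> (u * x)%R \in S.
Proof. by rewrite !inE exprMn => /eqP -> /eqP ->; rewrite mulr1. Qed.

Lemma Sinv u x : u \in S -> (u * (u * x))%R = x.
Proof. by rewrite inE mulrA -expr2 => /eqP ->; rewrite mul1r. Qed.

Lemma Sfix u x : u \in S -> x \in S -> (u * x)%R = x -> u = 1%R.
Proof.
move=> uS xS E; have : (u * x * x = x * x)%R by rewrite E.
move: xS; rewrite inE => /eqP x2.
by rewrite -mulrA -expr2 x2 mulr1.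
Qed.

Lemma S_even : 2 <= #|S| -> ~~ odd #|S|.
Proof.
move=> H2.
have [u uS u1] : exists2 u, u \in S & u != 1%R.
  have : 1 < #|S| := H2; rewrite (cardD1 1%R) S1 add1n ltnS => /card_gt0P [u].
  by rewrite !inE => /andP[u1 uS]; exists u; rewrite ?inE.
apply: (@invol_even _ (fun x => u * x)%R) => x xS; split.
- exact: SM.
- exact: Sinv.
- by apply: contra u1 => /eqP E; rewrite (Sfix uS xS E).
Qed.

Section Four.
Variables (u w : R).
Hypotheses (uS : u \in S) (wS : w \in S) (u1 : u != 1%R) (w1 : w != 1%R) (wu : w != u).

Let rk (x : R) : nat := enum_rank x.
Let c (y : R) := if rk y < rk (u * y)%R then y else (u * y)%R.
Let B := [set x in S | rk x < rk (u * x)%R].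

Lemma ux_neq x : x \in S -> (u * x)%R != x.
Proof. by move=> xS; apply: contra u1 => /eqP E; rewrite (Sfix uS xS E). Qed.

Lemma rk_inj x y : rk x = rk y -> x = y.
Proof. by move/ord_inj/enum_rank_inj. Qed.

Lemma cB y : y \in S -> c y \in B.
Proof.
move=> yS; rewrite /c /= inE; case: ifP => H; first by rewrite yS.
rewrite SM // Sinv //=.
rewrite ltn_neqAle; apply/andP; split; last by rewrite leqNgt H.
by apply/eqP => /rk_inj E; move: (ux_neq yS); rewrite E eqxx.
Qed.

Lemma cE x : x \in B -> c x = x /\ c (u * x)%R = x.
Proof.
rewrite inE => /andP[xS H]; rewrite /c /= H; split => //.
by rewrite (Sinv x uS) ltnNge (ltnW H) /=.
Qed.

Lemma cS y : c y = y \/ c y = (u * y)%R.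
Proof. by rewrite /c /=; case: ifP; [left|right]. Qed.

Lemma card_SB : #|S| = (#|B| * 2)%N.
Proof.
have BS : B \subset S by apply/subsetP => x; rewrite inE => /andP[].
rewrite -(cardsID B S) (setIidPr BS) muln2 -addnn; congr (_ + _).
have -> : S :\: B = [set (u * x)%R | x in B].
  apply/setP => y; rewrite in_setD; apply/idP/imsetP => [/andP[yNB yS]|[x xB ->]].
    exists (u * y)%R; last by rewrite (Sinv y uS).
    rewrite inE SM // (Sinv y uS) /= ltn_neqAle; apply/andP; split.
      by apply/eqP => /rk_inj E; move: (ux_neq yS); rewrite E eqxx.
    by move: yNB; rewrite inE yS /= -leqNgt.
  move: (xB); rewrite inE => /andP[xS H].
  by rewrite SM // andbT inE SM //= (Sinv x uS) -leqNgt ltnW.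
rewrite card_imset //; apply: (can_inj (g := fun x => (u * x)%R)) => x; exact: Sinv.
Qed.

Lemma B_even : ~~ odd #|B|.
Proof.
apply: (@invol_even _ (fun x => c (w * x)%R)) => x xB.
have xS : x \in S by move: xB; rewrite inE => /andP[].
have wxS : (w * x)%R \in S by exact: SM.
split; first exact: cB.
- case: (cS (w * x)%R) => ->; first by rewrite (Sinv _ wS) (cE xB).1.
  by rewrite mulrCA (Sinv _ wS) (cE xB).2.
- case: (cS (w * x)%R) => ->.
    by apply: contra w1 => /eqP E; rewrite (Sfix wS xS E).
  apply/eqP => E.
  have : (u * w = 1)%R by apply: (Sfix (SM uS wS) xS); rewrite -mulrA.
  move=> /(f_equal (fun z => u * z)%R); rewrite (Sinv _ uS) mulr1 => E2.
  by move: wu; rewrite E2 eqxx.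
Qed.

Lemma S_four_aux : 4 %| #|S|.
Proof.
rewrite card_SB; move: B_even; rewrite -dvdn2 => /dvdnP[m ->].
by rewrite -mulnA dvdn_mull.
Qed.
End Four.

Lemma S_four : 3 <= #|S| -> 4 %| #|S|.
Proof.
move=> H3.
have H2 : 2 <= #|S :\ 1%R| by move: H3; rewrite (cardsD1 1%R S) S1 add1n ltnS.
have [u uS1] : exists u, u \in S :\ 1%R by apply/card_gt0P; apply: leq_trans H2.
have H1 : 0 < #|S :\ 1%R :\ u| by move: H2; rewrite (cardsD1 u) uS1 add1n ltnS.
have [w] : exists w, w \in S :\ 1%R :\ u by apply/card_gt0P.
move: uS1; rewrite !in_setD1 => /andP[u1 uS] /and3P[wu w1 wS].
exact: (S_four_aux uS wS u1 w1 wu).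
Qed.
End Invol.


Section Cay.
Variable R : finComNzRingType.
Notation e := (@invCayley R).
Notation groot := (fingraph.root e).

Lemma inv_sym : symmetric e.
Proof.
move=> x y; rewrite /invCayley eq_sym; congr (_ && _).
by rewrite -opprB sqrrN.
Qed.

Lemma inv_irr : irreflexive e.
Proof. by move=> x; rewrite /invCayley eqxx. Qed.

Lemma inv_shift t x y : e (x + t)%R (y + t)%R = e x y.
Proof.
rewrite /invCayley (inj_eq (addIr t)); congr (_ && _).
by rewrite opprD addrACA subrr addr0.
Qed.

Lemma ecsym : connect_sym e. Proof. exact: sym_connect_sym inv_sym. Qed.

Lemma inv_S x y : e x y = ((x - y)%R \in S R).
Proof.
rewrite /invCayley inE; case: eqP => [->|] /=; last by [].
by rewrite subrr expr0n /= eq_sym oner_eq0.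
Qed.

Lemma deg_eq x : #|[pred y | e x y]| = #|S R|.
Proof.
have -> : S R = [set (x - y)%R | y in [pred y | e x y]].
  apply/setP => u; apply/idP/imsetP => [uS|[y]]; last by rewrite inE inv_S => + ->.
  exists (x - u)%R; rewrite ?subKr // inE /=; by rewrite (inv_S x (x - u)%R) subKr.
rewrite card_imset //; apply: (can_inj (g := fun y => (x - y)%R)) => y; exact: subKr.
Qed.

Lemma connect_shift_aux t x y : connect e x y -> connect e (x + t)%R (y + t)%R.
Proof.
move=> H.
have cl : closed e [pred z | connect e (x + t)%R (z + t)%R].
  apply: (intro_closed ecsym) => z z' ezz'; rewrite !inE => H'.
  by apply: connect_trans H' (connect1 _); rewrite inv_shift.
have := closed_connect cl H; rewrite !inE connect0 => <- //.
Qed.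

Lemma connect_shift t x y : connect e (x + t)%R (y + t)%R = connect e x y.
Proof.
apply/idP/idP; last exact: connect_shift_aux.
by move/(connect_shift_aux (- t)); rewrite !addrK.
Qed.

Lemma root_eq r x : roots e r -> (groot x == r) = connect e r x.
Proof. by move=> /eqP rr; rewrite -{1}rr (root_connect ecsym) ecsym. Qed.

Lemma root_shift r r' x : roots e r -> roots e r' ->
  (groot (x + (r' - r))%R == r') = (groot x == r).
Proof.
move=> rr rr'; rewrite !root_eq //.
by rewrite -{1}(subrK r r') (addrC (r' - r)%R) connect_shift.
Qed.

Lemma Vr_shift r r' : roots e r -> roots e r' -> Vr e r' = Vr e r.
Proof.
move=> rr rr'; rewrite /Vr.
have H : [pred x | groot x == r'] =i [set (x + (r' - r))%R | x in [pred x | groot x == r]].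
  move=> y; rewrite !inE; apply/idP/imsetP => [H|[x]]; last by rewrite inE => + ->; rewrite root_shift.
  exists (y - (r' - r))%R; last by rewrite subrK.
  by rewrite inE -(root_shift _ rr rr') subrK.
by rewrite (eq_card H) card_imset //; apply: addIr.
Qed.


Lemma fiber_card (P : pred R) x : P x ->
  #|[pred d : R * R | (e d.1 d.2 && P d.1) && (d.1 == x)]| = #|S R|.
Proof.
move=> Px; rewrite -(deg_eq x).
have H : [pred d : R * R | (e d.1 d.2 && P d.1) && (d.1 == x)] =i [set (x, y) | y in [pred y | e x y]].
  move=> [a b]; rewrite !inE /=; apply/idP/imsetP => [/andP[/andP[eab _] /eqP ax]|[y]].
    by exists b; rewrite ?inE -?ax.
  by rewrite inE => exy [-> ->]; rewrite exy Px eqxx.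
rewrite (eq_card H) card_imset //; move=> y y' [] //.
Qed.

Lemma sum_const_card (P : pred R) (n : nat) : \sum_(x | P x) n = #|P| * n.
Proof. exact: sum_nat_const. Qed.

Lemma Dr_card r : #|Dr e r| = #|S R| * Vr e r.
Proof.
rewrite (@card_partition_lab _ _ [pred x | groot x == r] fst (Dr e r)); last first.
  by move=> d; rewrite inE => /andP[].
rewrite (eq_bigr (fun _ => #|S R|)); first by rewrite sum_const_card mulnC.
move=> x rx; rewrite -(@fiber_card [pred z | groot z == r] x) //; apply: eq_card => d; by rewrite !inE.
Qed.

Lemma dart_card : #|dart e| = #|S R| * #|R|.
Proof.
rewrite (@card_partition_lab _ _ predT fst (dart e)) //.
rewrite (eq_bigr (fun _ => #|S R|)); first by rewrite sum_const_card mulnC.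
move=> x _; rewrite -(@fiber_card predT x) //; apply: eq_card => d; by rewrite !inE andbT.
Qed.

Lemma n_isolated_0 : n_isolated e = 0.
Proof.
apply: eq_card0 => x; rewrite !inE; apply/negP => /forallP H.
by have := H (x - 1)%R; rewrite inv_S subKr S1.
Qed.

Lemma deg1 x : exists y, e x y.
Proof. by exists (x - 1)%R; rewrite inv_S subKr S1. Qed.

Lemma deg2 : 2 <= #|S R| -> forall y x, e y x -> exists2 w, e y w & w != x.
Proof.
move=> H2 y x eyx.
have : 1 < #|[pred w | e y w]| by rewrite deg_eq.
rewrite (cardD1 x) inE eyx add1n ltnS => /card_gt0P[w]; rewrite !inE => /andP[wx eyw].
by exists w.
Qed.


Lemma ncomp_eq : n_components e = #|[pred r | roots e r]|.
Proof. by rewrite /n_components /n_comp_mem; apply: eq_card => r; rewrite !inE andbT. Qed.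

Lemma V_sum : #|R| = \sum_(r | roots e r) Vr e r.
Proof.
rewrite (@card_partition_lab _ _ (roots e) (groot) predT); last first.
  move=> x _; exact: (fingraph.roots_root ecsym).
by apply: eq_bigr => r _; apply: eq_card => x; rewrite !inE.
Qed.

Lemma F_sum (s : {perm (R * R)}) :
  n_comp (frel (face_perm s)) (dart e) = \sum_(r | roots e r) fcard (face_perm s) (Dr e r).
Proof.
rewrite /n_comp_mem (@card_partition_lab _ _ (roots e) (fun d => groot d.1)); last first.
  move=> x _; exact: (fingraph.roots_root ecsym).
apply: eq_bigr => r _; apply: eq_card => d; rewrite !inE /=.
by rewrite andbA.
Qed.

End Cay.


Section Transplant.
Variable R : finComNzRingType.
Notation e := (@invCayley R).
Notation groot := (fingraph.root e).
Variable s0 : {perm (R * R)}.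
Hypothesis rs0 : rotation_system e s0.
Variable r0 : R.
Hypothesis rr0 : roots e r0.

Definition shift (t : R) (d : R * R) : R * R := ((d.1 + t)%R, (d.2 + t)%R).
Definition tr (x : R) : R := (groot x - r0)%R.

Lemma shiftK t d : shift (- t)%R (shift t d) = d.
Proof. by case: d => a b; rewrite /shift /= !addrK. Qed.
Lemma shiftKV t d : shift t (shift (- t)%R d) = d.
Proof. by case: d => a b; rewrite /shift /= !subrK. Qed.
Lemma shift_inj t : injective (shift t).
Proof. exact: can_inj (shiftK t). Qed.
Lemma dart_shift t d : dart e (shift t d) = dart e d.
Proof. by rewrite /dart /= inv_shift. Qed.

Definition s1f d := shift (tr d.1) (s0 (shift (- tr d.1)%R d)).

Lemma s1f_fst d : (s1f d).1 = d.1.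
Proof. by rewrite /s1f /= (rs_fst rs0) /= subrK. Qed.

Lemma s1_inj : injective s1f.
Proof.
move=> d d' E; have E1 : d.1 = d'.1 by rewrite -s1f_fst E s1f_fst.
move: E; rewrite /s1f E1 => /shift_inj /perm_inj /shift_inj //.
Qed.
Definition s1 := perm s1_inj.

Lemma iter_s1 n d : iter n s1 d = shift (tr d.1) (iter n s0 (shift (- tr d.1)%R d)).
Proof.
elim: n => [|n IH] /=; first by rewrite shiftKV.
rewrite IH permE /s1f /= (iter_fst rs0) /= subrK shiftK //.
Qed.

Lemma rs1 : rotation_system e s1.
Proof.
case: rs0 => H1 H2 H3; split.
- move=> d nd; rewrite permE /s1f H1 ?shiftKV //; by rewrite dart_shift.
- move=> d dd; rewrite permE s1f_fst; split => //.
  rewrite /s1f dart_shift; case: (H2 (shift (- tr d.1)%R d)) => //; by rewrite dart_shift.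
- move=> d d' dd dd' E.
  have := H3 (shift (- tr d.1)%R d) (shift (- tr d.1)%R d'); rewrite !dart_shift /= E.
  move=> /(_ dd dd' erefl) /iter_findex H.
  by rewrite -(shiftKV (tr d.1) d') E -H -E -iter_s1 fconnect_iter.
Qed.

Lemma fp_transplant r : roots e r ->
  fcard (face_perm s1) (Dr e r) = fcard (face_perm s0) (Dr e r0).
Proof.
move=> rr.
pose t := (r - r0)%R.
apply: (@fcard_conj _ (face_perm s0) (face_perm s1) (shift t)).
- exact: fp_inj.
- exact: fp_inj.
- exact: shift_inj.
- apply: Dr_closed; [exact: inv_sym | exact: rs0].
- apply: Dr_closed; [exact: inv_sym | exact: rs1].
- move=> d; rewrite !inE /= inv_shift => /andP[-> /=]; by rewrite root_shift.
- move=> y; rewrite !inE => /andP[ey ry]; exists (shift (- t)%R y); last by rewrite shiftKV.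
  rewrite inE /= inv_shift ey /= -(root_shift _ rr0 rr) -/t subrK //.
- move=> d; rewrite !inE => /andP[ed /eqP rd].
  have r2 : groot (d.2 + t)%R = r.
    apply/eqP; rewrite root_shift //; rewrite (root_adj (@inv_sym R) ed) rd //.
  rewrite /face_perm permE /s1f /= /tr r2 -/t.
  by rewrite /shift /= !addrK.
Qed.

End Transplant.


Section Main.
Variable R : finComNzRingType.
Notation e := (@invCayley R).
Notation groot := (fingraph.root e).

Lemma dart_even : ~~ odd #|dart e|.
Proof.
rewrite -cardsE; apply: (@invol_even _ (fun d => (d.2, d.1))) => d; rewrite !inE unfold_in /= => ed.
split.
- by rewrite unfold_in /dart /= (@inv_sym R).
- by case: d ed.
- case: d ed => a b /= ed; apply/eqP => -[E _]; by rewrite E (@inv_irr R) in ed.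
Qed.

Lemma F_ge1 s : rotation_system e s -> forall r, roots e r -> 0 < fcard (face_perm s) (Dr e r).
Proof.
move=> rs r rr.
apply/(fcard_gt0P (fp_inj (s := s)) (Dr_closed (@inv_sym R) rs r)).
exists (r, (r - 1)%R); rewrite !inE /= inv_S subKr S1 /=; exact: rr.
Qed.

Lemma Vr_ge2 r : roots e r -> 2 <= Vr e r.
Proof.
move=> rr; have er : e r (r - 1)%R by rewrite inv_S subKr S1.
have ne : r != (r - 1)%R by apply: contraTneq er => <-; rewrite (@inv_irr R).
rewrite /Vr (_ : 2 = #|pred2 r (r - 1)%R|); last by rewrite card2 ne.
apply: subset_leq_card; apply/subsetP => x.
rewrite !inE => /orP[]/eqP ->; first exact: rr.
by rewrite (root_adj (@inv_sym R) er).
Qed.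

Lemma c_pos : 0 < n_components e.
Proof. rewrite ncomp_eq; apply/card_gt0P; exists (groot 0%R); rewrite inE; exact: (fingraph.roots_root (@ecsym R)). Qed.

End Main.

From mathcomp Require Import zify.


Theorem mainTheorem2 (R : finComNzRingType) :
  has_genus (@invCayley R) 1 ->
  connected_graph (@invCayley R) /\ regular_graph (@invCayley R) 4.
Proof.
move=> [[s0 [rs0 Heq]] Hmin].
set e := @invCayley R.
set k := #|S R|.
set n := #|R|.
set c := n_components e.
have nfE s : n_faces e s = \sum_(r | roots e r) fcard (face_perm s) (Dr e r).
  by rewrite /n_faces n_isolated_0 addn0 F_sum.
have Dk : #|dart e| = k * n by exact: dart_card.
have Deven := dart_even R.
have nE : n_edges e = #|dart e| %/ 2 by rewrite /n_edges; congr (_ %/ 2); apply: eq_card.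
have D2 : #|dart e| = 2 * n_edges e.
  by rewrite nE -{1}(odd_double_half #|dart e|) (negbTE Deven) add0n divn2 -mul2n.
have cpos : 0 < c := c_pos R.
have npos : 0 < n by apply/card_gt0P; exists 0%R.
have csum : \sum_(r | roots e r) 1 = c by rewrite /c ncomp_eq; exact: sum1_card.
have kpos : 0 < k by apply/card_gt0P; exists 1%R; exact: S1.
rewrite /n_vertices -/n in Heq Hmin.
set F0 := n_faces e s0.
set E := n_edges e.
have HeqC : 2 * c + E = n + F0 + 2 := Heq.
have HminC : forall s, rotation_system e s -> n + n_faces e s + 2 <= 2 * c + E := Hmin.
have DE : k * n = 2 * E by rewrite -Dk D2.
clear Heq Hmin D2 nE.
have k6 : 2 <= k -> k <= 6.
  move=> k2; have fb := face_bound (@inv_sym R) (@inv_irr R) rs0 (deg2 k2).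
  have fbC : 3 * F0 <= k * n.
    by rewrite -Dk /F0 /n_faces n_isolated_0 addn0.
  have : k * n <= 6 * n by lia.
  by rewrite leq_pmul2r.
have kcase : k = 4 \/ k = 1 \/ k = 2.
  case: (leqP 3 k) => H3; last by lia.
  have := S_four H3; have := k6 (ltnW H3); rewrite -/k => k6' /dvdnP[q qE].
  left; lia.
pose Fr s r := fcard (face_perm s) (Dr e r).
have F0sum : F0 = \sum_(r | roots e r) Fr s0 r by rewrite /F0 nfE.
have par r : odd (Fr s0 r) = odd (#|Dr e r| %/ 2) (+) odd (Vr e r).
  exact: (Dr_parity (@inv_sym R) (@inv_irr R) rs0 (deg1 (R:=R))).
have Drk r : #|Dr e r| = k * Vr e r by exact: Dr_card.
have Vsum : n = \sum_(r | roots e r) Vr e r by exact: V_sum.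
have sumc (a : nat) : \sum_(r | roots e r) a = c * a.
  by rewrite /c ncomp_eq; exact: sum_nat_const.
have k4 : k = 4.
  case: kcase => [//|[k1|k2]]; exfalso.
  + have Fc : c <= F0 by rewrite F0sum -csum; apply: leq_sum => r rr; exact: F_ge1.
    have Vc : c * 2 <= n by rewrite Vsum -sumc; apply: leq_sum => r rr; exact: Vr_ge2.
    lia.
  + have Fc : c * 2 <= F0.
      rewrite F0sum -sumc; apply: leq_sum => r rr.
      have := par r; rewrite Drk k2 mulKn // addbb.
      have := F_ge1 rs0 rr; rewrite -/(Fr s0 r).
      case: (Fr s0 r) => [|[|]] //.
    lia.
have c1 : c = 1.
  pose m := Vr e (fingraph.root e 0%R).
  have rr0 : roots e (fingraph.root e 0%R) by exact: (fingraph.roots_root (@ecsym R)).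
  have Vm r : roots e r -> Vr e r = m by move=> rr; exact: Vr_shift.
  have nm : n = c * m by rewrite Vsum -sumc; apply: eq_bigr => r rr; exact: Vm.
  have Fm r : roots e r -> Fr s0 r <= m.
    move=> rr; have := HminC _ (rs1 rs0 r); rewrite nfE.
    rewrite (eq_bigr (fun _ => Fr s0 r)); last first.
      move=> r' rr'; exact: fp_transplant.
    rewrite sumc => H.
    have : c * Fr s0 r < c * (m + 2) by rewrite mulnDr; lia.
    rewrite ltn_pmul2l // => H2.
    have := par r; rewrite Drk k4 Vm // (_ : 4 * m %/ 2 = 2 * m); last first.
      by rewrite (_ : 4 = 2 * 2) // -mulnA mulKn.
    move=> po; case: (leqP (Fr s0 r) m) => // Hgt.
    have Em : Fr s0 r = m.+1 by lia.
    by move: po; rewrite Em /= oddM /=; case: (odd m).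
  have : F0 <= c * m by rewrite F0sum -sumc; apply: leq_sum => r rr; exact: Fm.
  lia.
split; last by move=> x; rewrite deg_eq.
move=> x y; apply/(fingraph.rootP (@ecsym R)).
have : #|[pred r | roots e r]| <= 1 by rewrite -ncomp_eq -/c c1.
move/card_le1P => H1.
have rx : fingraph.root e x \in [pred r | roots e r] by rewrite inE; exact: (fingraph.roots_root (@ecsym R)).
have ry : fingraph.root e y \in [pred r | roots e r] by rewrite inE; exact: (fingraph.roots_root (@ecsym R)).
by have := H1 _ rx (fingraph.root e y); rewrite ry inE => /esym/eqP.
Qed.
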